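(* Let $(n,t)\in\{(9,11),(10,13),(11,16)\}$. Then every $n$-vertex graph containing at least $t$ triangles contains a copy of $\widehat P_4$ as a (not necessarily induced) subgraph. Equivalently, $\mathrm{ex}(9,K_3,\widehat P_4)\le 10$, $\mathrm{ex}(10,K_3,\widehat P_4)\le 12$ and $\mathrm{ex}(11,K_3,\widehat P_4)\le 15$.
   Context: All graphs are finite and simple. $P_4$ denotes the path on $4$ vertices. For a graph $G$, its suspension $\widehat G$ is the graph obtained from $G$ by adding one new vertex and joining it to every vertex of $G$. $\mathrm{ex}(n,K_3,H)$ denotes the maximum number of triangles in an $n$-vertex graph containing no subgraph isomorphic to $H$. *)

(* Defs.v *)
From mathcomp Require Import all_boot.
Set Implicit Arguments. Unset Strict Implicit. Unset Printing Implicit Defensive.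

Definition simple_graph (T : finType) (e : rel T) : Prop :=
  irreflexive e /\ symmetric e.

Definition triangles (T : finType) (e : rel T) : {set {set T}} :=
  [set S : {set T} | (#|S| == 3) &&
     [forall x in S, forall y in S, (x != y) ==> e x y]].

Definition num_triangles (T : finType) (e : rel T) : nat := #|triangles e|.

(* The graph P_4-hat (suspension of P_4) on 'I_5:
   vertex 0 is the apex, joined to 1,2,3,4; path 1-2-3-4. *)
Definition P4hat_edge (i j : 'I_5) : bool :=
  let a := nat_of_ord i in let b := nat_of_ord j in
  (a != b) && [|| (a == 0), (b == 0), (a == b.+1) | (b == a.+1)].

Definition contains_subgraph (U T : finType) (h : rel U) (e : rel T) : Prop :=
  exists f : U -> T, injective f /\ forall u v, h u v -> e (f u) (f v).

(* Main.v *)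
Require Import Defs.
From mathcomp Require Import all_boot.
From mathcomp Require Import zify.
From Stdlib Require Import Classical.
Set Implicit Arguments. Unset Strict Implicit. Unset Printing Implicit Defensive.

Section Count.
Variable T : finType.

Lemma sum_bool_card (U : finType) (P : pred U) (Q : pred U) :
  \sum_(p | P p) (Q p : nat) = #|[set p | P p && Q p]|.
Proof.
rewrite -sum1dep_card big_mkcondr /=; apply: eq_bigr => p _.
by case: (Q p).
Qed.

Lemma fiber (U : finType) (F : {set {set T}}) (I : pred U) (R : {set T} -> U -> bool) :
  (forall p, I p -> #|[set S in F | R S p]| <= 1) ->
  \sum_(S in F) #|[set p | I p && R S p]| <= #|[set p | I p]|.
Proof.
move=> H1.
rewrite (eq_bigr (fun S => \sum_(p | I p) (R S p : nat))); last first.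
  by move=> S _; rewrite sum_bool_card.
rewrite exchange_big /= -sum1dep_card; apply: leq_sum => p Ip.
by rewrite sum_bool_card; apply: H1.
Qed.

Lemma amgm (x y : nat) : 2 * (x * y) <= x ^ 2 + y ^ 2.
Proof.
case: (leqP x y) => h.
  have [k ->] : exists k, y = x + k by exists (y - x); rewrite subnKC.
  rewrite sqrnD; nia.
have [k ->] : exists k, x = y + k by exists (x - y); rewrite subnKC // ltnW.
rewrite sqrnD; nia.
Qed.

Lemma cauchy (Y : {set T}) (a : T -> nat) :
  (\sum_(y in Y) a y) ^ 2 <= #|Y| * \sum_(y in Y) a y ^ 2.
Proof.
set S := \sum_(y in Y) a y; set Q := \sum_(y in Y) a y ^ 2.
have E1 : S ^ 2 = \sum_(y in Y) \sum_(z in Y) a y * a z.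
  by rewrite /S expnS expn1 big_distrl /=; apply: eq_bigr => y _; rewrite big_distrr.
have E2 : \sum_(y in Y) \sum_(z in Y) (a y ^ 2 + a z ^ 2) = #|Y| * Q + #|Y| * Q.
  rewrite (eq_bigr (fun y => #|Y| * a y ^ 2 + Q)); last first.
    by move=> y _; rewrite big_split /= sum_nat_const.
  by rewrite big_split /= sum_nat_const -big_distrr.
have L : \sum_(y in Y) \sum_(z in Y) 2 * (a y * a z) <=
         \sum_(y in Y) \sum_(z in Y) (a y ^ 2 + a z ^ 2).
  by apply: leq_sum => y _; apply: leq_sum => z _; apply: amgm.
have : 2 * S ^ 2 <= 2 * (#|Y| * Q).
  rewrite E1 big_distrr /=.
  rewrite (eq_bigr (fun y => \sum_(z in Y) 2 * (a y * a z))); last first.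
    by move=> y _; rewrite big_distrr.
  by apply: (leq_trans L); rewrite E2; lia.
by rewrite leq_pmul2l.
Qed.

Lemma mantel (R : rel T) (Y : {set T}) : symmetric R ->
  (forall a b c, R a b -> R b c -> R a c -> False) ->
  2 * #|[set p : T * T | [&& p.1 \in Y, p.2 \in Y & R p.1 p.2]]| <= #|Y| ^ 2.
Proof.
move=> Rs Rtf.
pose d y := #|[set z in Y | R y z]|.
have ED : #|[set p : T * T | [&& p.1 \in Y, p.2 \in Y & R p.1 p.2]]| = \sum_(y in Y) d y.
  symmetry; rewrite (eq_bigr (fun y => \sum_(z | (z \in Y) && R y z) 1)); last first.
    by move=> y _; rewrite sum1dep_card.
  rewrite pair_big_dep /= sum1dep_card.
  by apply: eq_card => p; rewrite !inE.
set D := #|[set p : T * T | _]| in ED *.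
have Eb : forall y z, y \in Y -> z \in Y -> R y z -> d y + d z <= #|Y|.
  move=> y z yY zY Ryz.
  have I0 : [set w in Y | R y w] :&: [set w in Y | R z w] = set0.
    apply/setP=> w; rewrite !inE; apply/negP => /andP[/andP[_ Ryw] /andP[_ Rzw]].
    by apply: (Rtf y z w).
  rewrite /d -[_ + _]subn0 -(cards0 T) -I0 -cardsU; apply: subset_leq_card.
  by apply/subsetP=> w; rewrite !inE => /orP[]/andP[].
have Ea : \sum_(y in Y) \sum_(z | (z \in Y) && R y z) (d y + d z) = 2 * \sum_(y in Y) d y ^ 2.
  rewrite (eq_bigr (fun y => d y ^ 2 + \sum_(z | (z \in Y) && R y z) d z)); last first.
    by move=> y _; rewrite big_split /= sum_nat_cond_const.
  rewrite big_split /= mul2n -addnn; congr (_ + _).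
  rewrite (exchange_big_dep (fun z => z \in Y)) /=; last by move=> i j _ /andP[].
  apply: eq_bigr => z zY; rewrite sum_nat_cond_const; congr (_ * _).
  by apply: eq_card => y; rewrite !inE zY Rs.
have L1 : 2 * \sum_(y in Y) d y ^ 2 <= #|Y| * D.
  rewrite -Ea ED big_distrr /=; apply: leq_sum => y yY.
  have -> : #|Y| * d y = \sum_(z | (z \in Y) && R y z) #|Y| by rewrite sum_nat_cond_const mulnC.
  by apply: leq_sum => z /andP[zY Ryz]; apply: Eb.
have L2 := cauchy Y d; rewrite -ED in L2.
have L3 : D * (2 * D) <= D * #|Y| ^ 2 by nia.
case: (posnP D) => [->//|Dp]; by rewrite leq_pmul2l in L3.
Qed.

End Count.


Section G.
Variables (T : finType) (e : rel T).
Hypothesis esy : symmetric e.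
Hypothesis eirr : irreflexive e.

Lemma p4hat_of (w a b c d : T) : uniq [:: w; a; b; c; d] ->
  e w a -> e w b -> e w c -> e w d -> e a b -> e b c -> e c d ->
  contains_subgraph P4hat_edge e.
Proof.
move=> U wa wb wc wd ab bc cd.
exists (fun i : 'I_5 => nth w [:: w; a; b; c; d] i); split.
  by move=> i j /eqP; rewrite nth_uniq // => /eqP/val_inj.
move=> [i Hi] [j Hj]; rewrite /P4hat_edge /=.
case: i Hi => [|[|[|[|[|i]]]]] Hi //; case: j Hj => [|[|[|[|[|j]]]]] Hj //= _.
all: try by [].
all: try by rewrite esy.

Qed.
Hypothesis Hfree : ~ contains_subgraph P4hat_edge e.

Ltac solve_uniq := rewrite /= ?inE ?negb_or ?andbT; repeat (apply/andP; split); try (by []); try (by rewrite eq_sym).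

Definition clique (S : {set T}) := [forall x in S, forall y in S, (x != y) ==> e x y].
Definition isK4 (Q : {set T}) := (#|Q| == 4) && clique Q.
Definition cn (x y : T) := #|[set w | e x w && e y w]|.

Lemma cliqueP (S : {set T}) : reflect (forall x y, x \in S -> y \in S -> x != y -> e x y) (clique S).
Proof.
apply: (iffP forallP) => [H x y xS yS xy|H x].
  by move: (H x); rewrite xS /= => /forall_inP/(_ y yS)/implyP; apply.
by apply/implyP=> xS; apply/forall_inP=> y yS; apply/implyP; apply: H.
Qed.

Lemma nop4 (w a b c d : T) : uniq [:: w; a; b; c; d] ->
  e w a -> e w b -> e w c -> e w d -> e a b -> e b c -> e c d -> False.
Proof. by move=> *; apply: Hfree; apply: (@p4hat_of w a b c d). Qed.

Lemma eneq x y : e x y -> x != y.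
Proof. by apply: contraTneq => ->; rewrite eirr. Qed.

Lemma set3 (S : {set T}) y : #|S| = 3 -> y \in S ->
  exists u v, [/\ u \in S, v \in S, u != v, u != y & v != y] /\ S = [set y; u; v].
Proof.
move=> S3 yS; have : #|S :\ y| = 2 by move: S3; rewrite (cardsD1 y) yS add1n => -[].
case/eqP/cards2P=> u [v [uv Huv]].
have uS : u \in S :\ y by rewrite Huv !inE eqxx.
have vS : v \in S :\ y by rewrite Huv !inE eqxx orbT.
move: uS vS; rewrite !inE => /andP[uy uS] /andP[vy vS].
exists u, v; split => //.
by rewrite -{1}(setD1K yS) Huv setUA.
Qed.

Lemma set4 (Q : {set T}) a b : #|Q| = 4 -> a \in Q -> b \in Q -> a != b ->
  exists c d, [/\ c \in Q, d \in Q & c != d] /\ [/\ c != a, c != b, d != a & d != b].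
Proof.
move=> Q4 aQ bQ ab.
have : #|Q :\ a :\ b| = 2.
  by move: Q4; rewrite (cardsD1 a) aQ (cardsD1 b (Q :\ a)) !inE eq_sym ab bQ !add1n => -[].
case/eqP/cards2P=> c [d [cd Hcd]].
have cQ : c \in Q :\ a :\ b by rewrite Hcd !inE eqxx.
have dQ : d \in Q :\ a :\ b by rewrite Hcd !inE eqxx orbT.
move: cQ dQ; rewrite !inE => /and3P[cb ca cQ] /and3P[db da dQ].
by exists c, d.
Qed.

Lemma K4_out (Q : {set T}) a b w : isK4 Q -> a \in Q -> b \in Q -> a != b ->
  w \notin Q -> e a w -> e b w -> False.
Proof.
case/andP=> /eqP Q4 /cliqueP cl aQ bQ ab wQ aw bw.
have [c [d [[cQ dQ cd] [ca cb da db]]]] := set4 Q4 aQ bQ ab.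
have wa : w != a by apply: contraNneq wQ => ->.
have wb : w != b by apply: contraNneq wQ => ->.
have wc : w != c by apply: contraNneq wQ => ->.
have wd : w != d by apply: contraNneq wQ => ->.
apply: (@nop4 a w b c d) => //.
all: try by rewrite esy.
all: try by apply: cl; rewrite // eq_sym.
rewrite /= !inE !negb_or ab (eq_sym a w) wa (eq_sym a c) ca (eq_sym a d) da wb wc wd.
by rewrite (eq_sym b c) cb (eq_sym b d) db cd.
Qed.

Lemma K4_in (Q : {set T}) a b w : isK4 Q -> a \in Q -> b \in Q -> a != b ->
  e a w -> e b w -> w \in Q.
Proof.
move=> K aQ bQ ab aw bw; apply/negPn/negP=> wQ.
exact: (K4_out K aQ bQ ab wQ aw bw).
Qed.

Lemma K4_out1 (Q : {set T}) a b w : isK4 Q -> a \in Q -> b \in Q ->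
  w \notin Q -> e a w -> e b w -> a = b.
Proof.
move=> K aQ bQ wQ aw bw; apply/eqP/negPn/negP => ab.
exact: (K4_out K aQ bQ ab wQ aw bw).
Qed.

Lemma K4_cn (Q : {set T}) a b : isK4 Q -> a \in Q -> b \in Q -> a != b -> 2 <= cn a b.
Proof.
case/andP=> /eqP Q4 /cliqueP cl aQ bQ ab.
have [c [d [[cQ dQ cd] [ca cb da db]]]] := set4 Q4 aQ bQ ab.
apply/card_gt1P; exists c, d; rewrite !inE cd !cl // 1?eq_sym //.
Qed.

Lemma K4_share (Q Q' : {set T}) : isK4 Q -> isK4 Q' -> 1 < #|Q :&: Q'| -> Q = Q'.
Proof.
move=> K K'; case/card_gt1P=> a [b [aQ bQ ab]]; move: aQ bQ; rewrite !inE.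
case/andP=> aQ aQ' /andP[bQ bQ'].
move: (K) (K') => /andP[/eqP Q4 _] /andP[/eqP Q'4 /cliqueP cl'].
apply/esym/eqP; rewrite eqEcard Q4 Q'4 leqnn andbT; apply/subsetP=> v vQ'.
case: (eqVneq v a) => [->//|va]; case: (eqVneq v b) => [->//|vb].
by apply: (K4_in K aQ bQ ab); apply: cl' => //; rewrite eq_sym.
Qed.

Lemma tri_ext a b c : uniq [:: a; b; c] -> e a b -> e a c -> e b c ->
  1 < cn a b -> 1 < cn a c -> exists w, [&& e a w, e b w & e c w].
Proof.
rewrite /= !inE negb_or => /and3P[/andP[ab ac] bc _] eab eac ebc.
case/card_gt1P=> w1 [w2 [w1S w2S w12]].
have [w [wS wc]] : exists w, w \in [set w | e a w && e b w] /\ w != c.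
  case: (eqVneq w1 c) => [w1c|]; last by exists w1.
  by exists w2; rewrite -w1c eq_sym.
case/card_gt1P=> u1 [u2 [u1S u2S u12]].
have [u [uS ub]] : exists u, u \in [set w | e a w && e c w] /\ u != b.
  case: (eqVneq u1 b) => [u1b|]; last by exists u1.
  by exists u2; rewrite -u1b eq_sym.
move: wS uS; rewrite !inE => /andP[aw bw] /andP[au cu].
case cw: (e c w); first by exists w; rewrite aw bw cw.
case bu: (e b u); first by exists u; rewrite au bu cu.
exfalso; apply: (@nop4 a w b c u) => //; last by rewrite esy.
have := eneq aw; have := eneq bw; have := eneq au; have := eneq cu.
have uw : u != w by apply/eqP=> E; move: cw; rewrite -E cu.
move=> *; solve_uniq.
Qed.


Local Notation tri := (triangles e).


Lemma cn_sym x y : cn x y = cn y x.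
Proof. by apply: eq_card => w; rewrite !inE andbC. Qed.

Lemma triP (S : {set T}) : reflect (#|S| = 3 /\ forall x y, x \in S -> y \in S -> x != y -> e x y) (S \in tri).
Proof.
rewrite inE; apply: (iffP andP) => [[/eqP -> /cliqueP]|[-> /cliqueP]] //.
Qed.

Lemma tri_pair (S : {set T}) y z : S \in tri -> y \in S -> z \in S -> y != z ->
  exists w, [/\ w \in S, w != y, w != z, e y w & e z w] /\ S = [set y; z; w].
Proof.
case/triP=> S3 cl yS zS yz.
have [u [v [[uS vS uv uy vy] defS]]] := set3 S3 yS.
have : z \in [set y; u; v] by rewrite -defS.
rewrite !inE -orbA => /or3P[/eqP zy|/eqP zu|/eqP zv].
- by rewrite zy eqxx in yz.
- subst z; exists v; split; first by rewrite vS vy eq_sym uv !cl // eq_sym.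
  by [].
- subst z; exists u; split; first by rewrite uS uy uv !cl // 1?eq_sym.
  by rewrite defS -!setUA [[set v] :|: _]setUC.
Qed.

Lemma tri3 (S : {set T}) : S \in tri -> exists a b c,
  ([/\ a != b, a != c & b != c] /\ [/\ e a b, e a c & e b c]) /\ S = [set a; b; c].
Proof.
move=> St; have /card_gt0P[a aS] : 0 < #|S| by case/triP: St => ->.
move/triP: (St) => [S3 cl].
have [u [v [[uS vS uv uy vy] defS]]] := set3 S3 aS.
exists a, u, v; split => //.
by split; [rewrite !(eq_sym a) uy vy uv | rewrite !cl // eq_sym].
Qed.

Lemma tri_of a b c : a != b -> a != c -> b != c -> e a b -> e a c -> e b c ->
  [set a; b; c] \in tri.
Proof.
move=> ab ac bc eab eac ebc.
apply/triP; split.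
  by rewrite -setUA cardsU1 cards2 bc !inE negb_or ab ac.
by move=> x y; rewrite !inE -!orbA => /or3P[]/eqP-> /or3P[]/eqP->; rewrite ?eqxx // => _;
   rewrite 1?esy.
Qed.

Definition rk (x : T) : nat := enum_rank x.

Definition drop (y z : T) := [exists w, [&& e y w, e z w, cn y w == 1, cn z w == 1,
   rk w < rk y & rk w < rk z]].
Definition H (y z : T) := [&& e y z, cn y z == 1 & ~~ drop y z].

Lemma drop_sym y z : drop y z = drop z y.
Proof.
apply/existsP/existsP=> [][w /and5P[a b c d /andP[f g]]]; exists w;
  by rewrite a b c d f g.
Qed.

Lemma H_sym y z : H y z = H z y.
Proof. by rewrite /H esy cn_sym drop_sym. Qed.

Lemma cn1_uniq x y w1 w2 : cn x y = 1 -> e x w1 -> e y w1 -> e x w2 -> e y w2 -> w1 = w2.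
Proof.
move=> c1 a b c d; have : #|[set w | e x w && e y w]| <= 1 by rewrite /cn in c1; rewrite c1.
move/card_le1P=> /(_ w1); rewrite inE a b => /(_ isT w2); rewrite !inE c d /=.
by move/esym/eqP.
Qed.

Lemma drop_char x y z : cn x y = 1 -> e x z -> e y z ->
  drop x y = [&& cn x z == 1, cn y z == 1, rk z < rk x & rk z < rk y].
Proof.
move=> c1 xz yz; apply/existsP/idP => [[w /and5P[xw yw c d /andP[f g]]]|].
  by have <- := cn1_uniq c1 xw yw xz yz; rewrite c d f g.
by case/and4P=> a b c d; exists z; rewrite xz yz a b c d.
Qed.

Lemma rk_inj x y : rk x = rk y -> x = y.
Proof. by move/val_inj/enum_rank_inj. Qed.

Lemma H_tri_key x y z : H x y -> H y z -> H x z -> rk x < rk y -> rk x < rk z -> False.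
Proof.
case/and3P=> xy /eqP cxy _ /and3P[yz _ dyz] /and3P[xz /eqP cxz _] lxy lxz.
move/negP: dyz; apply; apply/existsP; exists x.
by rewrite !(esy _ x) xy xz cn_sym cxy cn_sym cxz !eqxx lxy lxz.
Qed.

Lemma H_tri_free a b c : H a b -> H b c -> H a c -> False.
Proof.
move=> hab hbc hac.
have ab : a != b by case/and3P: hab => /eneq.
have ac : a != c by case/and3P: hac => /eneq.
have bc : b != c by case/and3P: hbc => /eneq.
have nab : rk a != rk b by apply: contra_neq ab => /rk_inj.
have nac : rk a != rk c by apply: contra_neq ac => /rk_inj.
have nbc : rk b != rk c by apply: contra_neq bc => /rk_inj.
have hba : H b a by rewrite H_sym. have hcb : H c b by rewrite H_sym.
have hca : H c a by rewrite H_sym.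
case: (ltngtP (rk a) (rk b)) nab => // ltab _; case: (ltngtP (rk a) (rk c)) nac => // ltac _;
case: (ltngtP (rk b) (rk c)) nbc => // ltbc _.
all: first [ exact: (H_tri_key hab hbc hac)
           | exact: (H_tri_key hba hac hbc)
           | exact: (H_tri_key hca hab hcb)
           | exact: (H_tri_key hac hcb hab)
           | exact: (H_tri_key hbc hca hba)
           | exact: (H_tri_key hcb hba hca)
           | idtac ].
all: lia.
Qed.



Definition inS (S : {set T}) (p : T * T) := (p.1 \in S) && (p.2 \in S).
Definition Hp (p : T * T) := H p.1 p.2.

Lemma count4 (S : {set T}) u v w : u \in S -> v \in S -> w \in S ->
  u != v -> u != w -> v != w -> H u v -> H u w ->
  4 <= #|[set p | Hp p && inS S p]|.
Proof.
move=> uS vS wS uv uw vw huv huw.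
have hvu : H v u by rewrite H_sym. have hwu : H w u by rewrite H_sym.
apply/card_geqP; exists [:: (u, v); (v, u); (u, w); (w, u)]; split => //.
  have vu : (v == u) = false by rewrite eq_sym (negbTE uv).
  have wu : (w == u) = false by rewrite eq_sym (negbTE uw).
  have wv : (w == v) = false by rewrite eq_sym (negbTE vw).
  by rewrite /= !inE !xpair_eqE ?(negbTE uv) ?(negbTE uw) ?(negbTE vw) ?vu ?wu ?wv /= ?andbF.
by move=> p; rewrite !inE => /or4P[]/eqP-> ; rewrite /Hp /inS /= ?huv ?hvu ?huw ?hwu ?uS ?vS ?wS.
Qed.

Lemma H_char x y z : e x y -> e x z -> e y z -> cn x y = 1 ->
  H x y = ~~ [&& cn x z == 1, cn y z == 1, rk z < rk x & rk z < rk y].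
Proof.
move=> xy xz yz c1; rewrite /H xy c1 eqxx /=.
by rewrite (drop_char c1 xz yz).
Qed.

Lemma cn_pos x y z : e x z -> e y z -> 0 < cn x y.
Proof. by move=> xz yz; apply/card_gt0P; exists z; rewrite inE xz yz. Qed.

Lemma good_u u v w : u != v -> u != w -> v != w -> e u v -> e u w -> e v w ->
  cn u v = 1 -> cn u w = 1 -> (cn v w != 1) || ((rk u < rk v) && (rk u < rk w)) ->
  4 <= #|[set p | Hp p && inS [set u; v; w] p]|.
Proof.
move=> uv uw vw euv euw evw c1 c2 cnd.
have ewv : e w v by rewrite esy.
have Su : u \in [set u; v; w] by rewrite !inE eqxx.
have Sv : v \in [set u; v; w] by rewrite !inE eqxx !orbT.
have Sw : w \in [set u; v; w] by rewrite !inE eqxx !orbT.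
apply: (count4 Su Sv Sw uv uw vw).
  rewrite (H_char euv euw evw c1) c2 eqxx /=; move: cnd.
  case: (cn v w == 1) => //= /andP[h1 h2]; apply/negP => /andP[h3 h4]; lia.
rewrite (H_char euw euv ewv c2) c1 eqxx cn_sym /=; move: cnd.
case: (cn v w == 1) => //= /andP[h1 h2]; apply/negP => /andP[h3 h4]; lia.
Qed.

Lemma tri_twoH a b c : a != b -> a != c -> b != c -> e a b -> e a c -> e b c ->
  (forall w, ~~ [&& e a w, e b w & e c w]) ->
  4 <= #|[set p | Hp p && inS [set a; b; c] p]|.
Proof.
move=> ab ac bc eab eac ebc NK.
have ba : e b a by rewrite esy. have ca : e c a by rewrite esy.
have cb : e c b by rewrite esy.
have NX : forall x y z, x != y -> x != z -> y != z -> e x y -> e x z -> e y z ->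
   (forall w, ~~ [&& e x w, e y w & e z w]) -> ~~ ((1 < cn x y) && (1 < cn x z)).
  move=> x y z xy xz yz exy exz eyz nk; apply/negP => /andP[h1 h2].
  have [w /and3P[xw yw zw]] := @tri_ext x y z
    ltac:(by rewrite /= !inE negb_or xy xz yz) exy exz eyz h1 h2.
  by move: (nk w); rewrite xw yw zw.
have N1 := NX a b c ab ac bc eab eac ebc NK.
have N2 : ~~ ((1 < cn b a) && (1 < cn b c)).
  apply: NX => //; try by rewrite eq_sym.
  by move=> w; apply: contra (NK w) => /and3P[h1 h2 h3]; rewrite h1 h2 h3.
have N3 : ~~ ((1 < cn c a) && (1 < cn c b)).
  apply: NX => //; try by rewrite eq_sym.
  by move=> w; apply: contra (NK w) => /and3P[h1 h2 h3]; rewrite h1 h2 h3.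
have pab := cn_pos eac ebc. have pac := cn_pos eab cb.
have pbc := cn_pos ba ca.
rewrite (cn_sym b a) (cn_sym c a) (cn_sym c b) in N2 N3.
have one : forall x y, 0 < cn x y -> (1 < cn x y) = (cn x y != 1).
  by move=> x y; case: (cn x y) => [|[|n]].
rewrite (one _ _ pab) (one _ _ pac) (one _ _ pbc) in N1 N2 N3.
have nab : rk a != rk b by apply: contra_neq ab => /rk_inj.
have nac : rk a != rk c by apply: contra_neq ac => /rk_inj.
have nbc : rk b != rk c by apply: contra_neq bc => /rk_inj.
have ab1 : cn b a = cn a b by rewrite cn_sym.
have ac1 : cn c a = cn a c by rewrite cn_sym.
have bc1 : cn c b = cn b c by rewrite cn_sym.
case Kbc: (cn b c == 1); last first.
  move: N2 N3; rewrite Kbc !andbT !negbK => /eqP K1 /eqP K2.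
  by apply: good_u => //; rewrite Kbc.
case Kac: (cn a c == 1); last first.
{ move: N1 N3; rewrite Kac !andbT !negbK => /eqP K1 /eqP K2.
  have -> : [set a; b; c] = [set b; a; c] by rewrite [[set a] :|: _]setUC.
  apply: good_u => //.
  all: try by rewrite eq_sym.
  all: by rewrite ?ab1 ?ac1 ?bc1 ?K1 ?K2 ?Kac. }
case Kab: (cn a b == 1); last first.
{ move: N1 N2; rewrite Kab !negbK => /eqP K1 /eqP K2.
  have -> : [set a; b; c] = [set c; a; b] by rewrite setUC setUA.
  apply: good_u => //.
  all: try by rewrite eq_sym.
  all: by rewrite ?ab1 ?ac1 ?bc1 ?K1 ?K2 ?Kab. }
move/eqP: Kab => Kab; move/eqP: Kac => Kac; move/eqP: Kbc => Kbc.
case L1: ((rk a < rk b) && (rk a < rk c)).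
  by apply: good_u => //; rewrite L1 orbT.
case L2: ((rk b < rk a) && (rk b < rk c)).
{ have -> : [set a; b; c] = [set b; a; c] by rewrite [[set a] :|: _]setUC.
  apply: good_u => //.
  all: try by rewrite eq_sym.
  all: by rewrite ?ab1 ?L2 ?orbT. }
have -> : [set a; b; c] = [set c; a; b] by rewrite setUC setUA.
apply: good_u => //.
all: try by rewrite eq_sym.
all: try by rewrite ?ac1 ?bc1.
apply/orP; right; move: L1 L2 nab nac nbc; clear; lia.
Qed.


Lemma K4_of (S : {set T}) w : S \in tri -> (forall x, x \in S -> e x w) -> isK4 (w |: S).
Proof.
case/triP=> S3 cl Sw.
have wS : w \notin S by apply/negP=> /Sw; rewrite eirr.
apply/andP; split; first by rewrite cardsU1 wS S3.
apply/cliqueP=> x y; rewrite !inE => /orP[/eqP->|xS] /orP[/eqP->|yS]; rewrite ?eqxx //.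
- by move=> _; rewrite esy Sw.
- by move=> _; rewrite Sw.
- by apply: cl.
Qed.

Lemma H_uniq_tri y z : H y z -> #|[set S in tri | inS S (y, z)]| <= 1.
Proof.
case/and3P=> eyz /eqP c1 _.
apply/card_le1_eqP => S1 S2 /setIdP[S1t /andP[yS1 zS1]] /setIdP[S2t /andP[yS2 zS2]].
have yz := eneq eyz.
have [w1 [[_ _ _ yw1 zw1] ->]] := tri_pair S1t yS1 zS1 yz.
have [w2 [[_ _ _ yw2 zw2] ->]] := tri_pair S2t yS2 zS2 yz.
by rewrite (cn1_uniq c1 yw1 zw1 yw2 zw2).
Qed.

Lemma tri_H_bound (F : {set {set T}}) : F \subset tri ->
  (forall S, S \in F -> forall w, ~~ [forall x in S, e x w]) ->
  4 * #|F| <= #|[set p | Hp p]|.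
Proof.
move=> Ft NK.
apply: (@leq_trans (\sum_(S in F) #|[set p | Hp p && inS S p]|)).
  rewrite mulnC -sum_nat_const; apply: leq_sum => S SF.
  have St : S \in tri by apply: (subsetP Ft).
  have [a [b [c [[[ab ac bc] [eab eac ebc]] defS]]]] := tri3 St.
  rewrite defS; apply: tri_twoH => // w; apply/negP=> /and3P[aw bw cw].
  move: (NK S SF w); rewrite defS => /negP; apply; apply/forall_inP => x.
  by rewrite !inE -orbA => /or3P[]/eqP->.
apply: fiber => -[y z] Hpp; apply: (leq_trans _ (H_uniq_tri Hpp)).
apply: subset_leq_card; apply/subsetP => S /setIdP[SF iS]; apply/setIdP; split => //.
exact: (subsetP Ft).
Qed.

Lemma D_mantel (Y : {set T}) :
  2 * #|[set p : T * T | [&& p.1 \in Y, p.2 \in Y & H p.1 p.2]]| <= #|Y| ^ 2.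
Proof.
apply: mantel; first by move=> x y; apply: H_sym.
by move=> a b c; apply: H_tri_free.
Qed.

Lemma case0 : (forall Q, ~~ isK4 Q) -> 8 * #|tri| <= #|T| ^ 2.
Proof.
move=> noK.
have L1 : 4 * #|tri| <= #|[set p | Hp p]|.
  apply: tri_H_bound => // S St w; apply/negP=> /forall_inP Sw.
  by move: (noK (w |: S)); rewrite K4_of.
have L2 := D_mantel [set: T]; rewrite cardsT in L2.
have E : #|[set p : T * T | [&& p.1 \in [set: T], p.2 \in [set: T] & H p.1 p.2]]| =
         #|[set p | Hp p]| by apply: eq_card => p; rewrite !inE.
rewrite E in L2; lia.
Qed.


Lemma tri_sub (B : {set T}) : #|[set S in tri | S \subset B]| <= 'C(#|B|, 3).
Proof.
rewrite -cards_draws; apply: subset_leq_card; apply/subsetP => S /setIdP[/triP[S3 _] SB].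
by rewrite inE SB S3 eqxx.
Qed.

Lemma H_out (Q : {set T}) y z : isK4 Q -> H y z -> y \in Q -> z \notin Q.
Proof.
move=> K /and3P[eyz /eqP c1 _] yQ; apply/negP => zQ.
by have := K4_cn K yQ zQ (eneq eyz); rewrite c1.
Qed.

Lemma Hp_outQ (Q : {set T}) : isK4 Q ->
  #|[set p | Hp p && (p.1 \in Q)]| <= #|~: Q|.
Proof.
move=> K.
rewrite -(@card_in_imset _ _ snd); last first.
  move=> [y1 z] [y2 z'] /setIdP[h1 q1] /setIdP[h2 q2] /= E; subst z'.
  move: h1 h2; rewrite /Hp /= => h1 h2.
  have zQ := H_out K h1 q1.
  case/and3P: h1 => e1 _ _; case/and3P: h2 => e2 _ _.
  by have /= -> := K4_out1 K q1 q2 zQ e1 e2.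
apply: subset_leq_card; apply/subsetP => z /imsetP[[y z'] /setIdP[h q] ->] /=.
by rewrite inE (H_out K h q).
Qed.

Lemma case1 (Q : {set T}) : isK4 Q -> (forall Q', isK4 Q' -> Q' = Q) ->
  8 * #|tri| <= 32 + 4 * #|~: Q| + #|~: Q| ^ 2.
Proof.
move=> K uniqK.
have Q4 : #|Q| = 4 by case/andP: K => /eqP.
set F := [set S in tri | ~~ (S \subset Q)].
have E1 : #|tri| <= #|[set S in tri | S \subset Q]| + #|F|.
  rewrite -(cardsID [set S : {set T} | S \subset Q] tri); apply: leq_add; apply: subset_leq_card;
    by apply/subsetP => S; rewrite !inE => /andP[-> ->].
have E2 : #|[set S in tri | S \subset Q]| <= 4 by have := tri_sub Q; rewrite Q4.
have E3 : 4 * #|F| <= #|[set p | Hp p]|.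
  apply: tri_H_bound; first by apply/subsetP => S /setIdP[].
  move=> S /setIdP[St SQ] w; apply/negP=> /forall_inP Sw.
  have KS := K4_of St Sw; rewrite -(uniqK _ KS) in SQ.
  by rewrite subsetUr in SQ.
have E4 : #|[set p | Hp p]| <= #|~: Q| + #|~: Q| +
          #|[set p : T * T | [&& p.1 \in ~: Q, p.2 \in ~: Q & H p.1 p.2]]|.
  apply: (@leq_trans (#|[set p | Hp p && (p.1 \in Q)]| + #|[set p | Hp p && (p.2 \in Q)]| +
     #|[set p : T * T | [&& p.1 \in ~: Q, p.2 \in ~: Q & H p.1 p.2]]|)); last first.
    rewrite leq_add2r; apply: leq_add; first exact: Hp_outQ.
    apply: (leq_trans _ (Hp_outQ K)).
    rewrite -(@card_imset _ _ (fun p : T * T => (p.2, p.1))); last by move=> [? ?] [? ?] [-> ->].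
    apply: subset_leq_card; apply/subsetP => -[y z] /imsetP[[y' z'] /setIdP[h q] [-> ->]].
    by rewrite inE /Hp /= H_sym q andbT.
  apply: (leq_trans _ (leq_add (leq_card_setU _ _) (leqnn _))).
  apply: (leq_trans _ (leq_card_setU _ _)); apply: subset_leq_card.
  apply/subsetP => -[y z]; rewrite !inE /Hp /= => h; rewrite h /=.
  by case: (y \in Q); case: (z \in Q).
have E5 := D_mantel (~: Q).
lia.
Qed.


Lemma tri_3pts (S : {set T}) x1 x2 x3 : S \in tri -> x1 \in S -> x2 \in S -> x3 \in S ->
  x1 != x2 -> x1 != x3 -> x2 != x3 -> S = [set x1; x2; x3].
Proof.
move=> St s1 s2 s3 d12 d13 d23.
have [w [[wS w1 w2 _ _] defS]] := tri_pair St s1 s2 d12.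
have : x3 \in [set x1; x2; w] by rewrite -defS.
rewrite !inE -orbA => /or3P[/eqP E|/eqP E|/eqP ->] //.
- by rewrite E eqxx in d13.
- by rewrite E eqxx in d23.
Qed.

Lemma tri_at_bound y : 2 * #|[set S in tri | y \in S]| <=
  #|[set p : T * T | [&& e y p.1, e y p.2 & e p.1 p.2]]|.
Proof.
set F := [set S in tri | y \in S].
apply: (@leq_trans (\sum_(S in F) #|[set p | [&& e y p.1, e y p.2 & e p.1 p.2] && inS S p]|)).
  rewrite mulnC -sum_nat_const; apply: leq_sum => S /setIdP[St yS].
  move/triP: (St) => [S3 cl].
  have [u [v [[uS vS uv uy vy] defS]]] := set3 S3 yS.
  apply/card_geqP; exists [:: (u, v); (v, u)]; split => //.
    by rewrite /= !inE !xpair_eqE (negbTE uv).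
  move=> p; rewrite !inE => /orP[]/eqP->; rewrite /inS /= uS vS !cl //;
    by rewrite 1?eq_sym.
apply: fiber => -[u v] /and3P[yu yv uv] /=.
apply/card_le1_eqP => S1 S2 /setIdP[/setIdP[S1t yS1] /andP[uS1 vS1]]
                      /setIdP[/setIdP[S2t yS2] /andP[uS2 vS2]].
have yu' : y != u by apply: eneq. have yv' : y != v by apply: eneq.
have uv' : u != v by apply: eneq.
by rewrite (tri_3pts S1t yS1 uS1 vS1) // (tri_3pts S2t yS2 uS2 vS2).
Qed.

Lemma deg4 y : #|[set z | e y z]| <= 4 -> #|[set S in tri | y \in S]| <= 3.
Proof.
move=> N4.
have np : forall u v w x, uniq [:: y; u; v; w; x] -> e y u -> e y v -> e y w -> e y x ->
   ~~ [&& e u v, e v w & e w x].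
  move=> u v w x U yu yv yw yx; apply/negP => /and3P[uv vw wx].
  exact: (nop4 U yu yv yw yx uv vw wx).
have B := tri_at_bound y.
set N := [set z | e y z] in N4.
have E : #|[set p : T * T | [&& e y p.1, e y p.2 & e p.1 p.2]]| =
         \sum_(u <- enum N) \sum_(v <- enum N) (e u v : nat).
  rewrite big_enum /=.
  rewrite (eq_bigr (fun u => \sum_(v | (v \in N) && e u v) 1)); last first.
    move=> u _; rewrite big_enum big_mkcondr /=; apply: eq_bigr => v _.
    by case: (e u v).
  rewrite pair_big_dep /= sum1dep_card; apply: eq_card => p.
  by rewrite !inE.
rewrite E in B.
have U := enum_uniq (mem N).
have M : forall z, z \in enum N -> e y z by move=> z; rewrite mem_enum inE.
have S4 : size (enum N) <= 4 by rewrite -cardE.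
suff : \sum_(u <- enum N) \sum_(v <- enum N) (e u v : nat) <= 6 by lia.
move: U M S4 {B E}.
case: (enum N) => [|a [|b [|c [|d [|? ?]]]]] //= U M _; rewrite ?big_cons ?big_nil /=.
all: try by rewrite ?addn0 ?eirr.
all: try by rewrite ?addn0 ?eirr /= (esy b a); case: (e a b).
all: try by rewrite ?addn0 ?eirr /= (esy b a) (esy c a) (esy c b); case: (e a b); case: (e a c); case: (e b c).
have ya := M a (mem_head _ _).
have yb : e y b by apply: M; rewrite !inE eqxx !orbT.
have yc : e y c by apply: M; rewrite !inE eqxx !orbT.
have yd : e y d by apply: M; rewrite !inE eqxx !orbT.
have y_a := eneq ya. have y_b := eneq yb. have y_c := eneq yc. have y_d := eneq yd.
move: U; rewrite /= !inE !negb_or => /and4P[/and3P[ab ac ad] /andP[bc bd] cd _].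
  have p0 := np a b c d ltac:(solve_uniq) ya yb yc yd.
  have p1 := np a b d c ltac:(solve_uniq) ya yb yd yc.
  have p2 := np a c b d ltac:(solve_uniq) ya yc yb yd.
  have p3 := np a c d b ltac:(solve_uniq) ya yc yd yb.
  have p4 := np a d b c ltac:(solve_uniq) ya yd yb yc.
  have p5 := np a d c b ltac:(solve_uniq) ya yd yc yb.
  have p6 := np b a c d ltac:(solve_uniq) yb ya yc yd.
  have p7 := np b a d c ltac:(solve_uniq) yb ya yd yc.
  have p8 := np b c a d ltac:(solve_uniq) yb yc ya yd.
  have p9 := np b d a c ltac:(solve_uniq) yb yd ya yc.
  have p10 := np c a b d ltac:(solve_uniq) yc ya yb yd.
  have p11 := np c b a d ltac:(solve_uniq) yc yb ya yd.
  move: p0 p1 p2 p3 p4 p5 p6 p7 p8 p9 p10 p11.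
  rewrite !addn0 !eirr /= (esy b a) (esy c a) (esy d a) (esy c b) (esy d b) (esy d c).
  by case: (e a b); case: (e a c); case: (e a d); case: (e b c); case: (e b d); case: (e c d).
Qed.


Lemma tri_small (B : {set T}) : #|B| <= 3 -> #|[set S in tri | S \subset B]| <= 1.
Proof.
move=> B3; apply: (leq_trans (tri_sub B)).
by case: #|B| B3 => [|[|[|[|?]]]].
Qed.

Lemma tri_pairs (F : {set {set T}}) y z (C : {set T}) : y != z ->
  (forall S, S \in F -> [/\ S \in tri, y \in S & z \in S]) ->
  (forall S w, S \in F -> w \in S -> w != y -> w != z -> w \in C) ->
  #|F| <= #|C|.
Proof.
move=> yz HF HC.
apply: (leq_trans _ (leq_imset_card (fun w => [set y; z; w]) C)).
apply: subset_leq_card; apply/subsetP => S SF.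
have [St yS zS] := HF S SF.
have [w [[wS wy wz _ _] defS]] := tri_pair St yS zS yz.
by apply/imsetP; exists w => //; apply: HC SF wS wy wz.
Qed.

Lemma nbrQ (Q : {set T}) y : isK4 Q -> y \notin Q -> #|[set z in Q | e y z]| <= 1.
Proof.
move=> K yQ; apply/card_le1_eqP => a b /setIdP[aQ ya] /setIdP[bQ yb].
have E : a = b by apply: (K4_out1 K aQ bQ yQ); rewrite esy.
by rewrite E.
Qed.

Lemma one_in (Q S : {set T}) : isK4 Q -> S \in tri -> ~~ (S \subset Q) -> #|S :&: Q| <= 1.
Proof.
move=> K St SQ; apply/card_le1_eqP => a b; rewrite !inE => /andP[aS aQ] /andP[bS bQ].
apply/eqP/negPn/negP => ab; move/negP: SQ; apply; apply/subsetP => v vS.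
case/triP: St => _ cl.
case: (eqVneq v a) => [->//|va]; case: (eqVneq v b) => [->//|vb].
by apply: (K4_in K bQ aQ ab); apply: cl; rewrite // eq_sym.
Qed.


Section C2.
Variables Q1 Q2 : {set T}.
Hypothesis K1 : isK4 Q1.
Hypothesis K2 : isK4 Q2.
Hypothesis I12 : #|Q1 :&: Q2| <= 1.

Let X := Q1 :|: Q2.
Let O := [set S in tri | ~~ (S \subset Q1) && ~~ (S \subset Q2)].

Lemma c2_base : #|tri| <= 8 + #|O|.
Proof.
have h1 := tri_sub Q1; have h2 := tri_sub Q2.
have Q14 : #|Q1| = 4 by case/andP: K1 => /eqP.
have Q24 : #|Q2| = 4 by case/andP: K2 => /eqP.
have c43 : 'C(4, 3) = 4 by [].
rewrite Q14 c43 in h1; rewrite Q24 c43 in h2.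
apply: (@leq_trans (#|[set S in tri | S \subset Q1]| + #|[set S in tri | S \subset Q2]| + #|O|));
  last by lia.
apply: (leq_trans _ (leq_add (leq_card_setU _ _) (leqnn _))).
apply: (leq_trans _ (leq_card_setU _ _)); apply: subset_leq_card.
apply/subsetP => S St.
case g1: (S \subset Q1); first by apply/setUP; left; apply/setUP; left; apply/setIdP.
case g2: (S \subset Q2); first by apply/setUP; left; apply/setUP; right; apply/setIdP.
by apply/setUP; right; apply/setIdP; rewrite g1 g2.
Qed.

Lemma c2_nX y : y \notin X -> #|[set w in X | e y w]| <= 2.
Proof.
rewrite !inE negb_or => /andP[y1 y2].
apply: (@leq_trans (#|[set w in Q1 | e y w]| + #|[set w in Q2 | e y w]|)).
  apply: (leq_trans _ (leq_card_setU _ _)); apply: subset_leq_card.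
  by apply/subsetP => w; rewrite !inE => /andP[/orP[]-> ->]; rewrite ?orbT.
exact: (leq_add (nbrQ K1 y1) (nbrQ K2 y2)).
Qed.

Lemma c2_split (S : {set T}) : #|S| = 3 -> #|S :&: X| + #|S :&: ~: X| = 3.
Proof. by move=> <-; rewrite -setDE cardsID. Qed.

Lemma c2_SX (S : {set T}) : S \in O -> #|S :&: X| <= 2.
Proof.
case/setIdP=> St /andP[n1 n2].
apply: (@leq_trans (#|S :&: Q1| + #|S :&: Q2|)); last first.
  exact: (leq_add (one_in K1 St n1) (one_in K2 St n2)).
by rewrite /X setIUr; apply: leq_card_setU.
Qed.

Lemma c2_sub_nbr (S : {set T}) y : S \in tri -> y \in S ->
  (forall v, v \in S -> v \notin X -> v = y) -> S \subset y |: [set w in X | e y w].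
Proof.
case/triP=> _ cl yS Hv; apply/subsetP => v vS; rewrite !inE.
case: (eqVneq v y) => //= vy.
case vX: (v \in X); last by move/negbT: vX => /(Hv v vS) E; rewrite E eqxx in vy.
by rewrite /X inE in vX; rewrite vX cl // eq_sym.
Qed.


Lemma c2_cross p a b : p \in Q1 -> p \in Q2 -> a \in Q1 -> a \notin Q2 -> b \in Q2 ->
  b \notin Q1 -> ~~ e a b.
Proof.
move=> p1 p2 a1 a2 b2 b1; apply/negP => eab.
have bp : b != p by apply: contraNneq b1 => ->.
have epb : e p b by case/andP: K2 => _ /cliqueP cl; apply: cl; rewrite // eq_sym.
have E := K4_out1 K1 a1 p1 b1 eab epb.
by rewrite E p2 in a2.
Qed.

Lemma c2_shX p (S : {set T}) : p \in Q1 -> p \in Q2 -> S \in O -> #|S :&: X| <= 1.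
Proof.
move=> p1 p2 SO; have := c2_SX SO.
case/setIdP: SO => St /andP[n1 n2] _.
have o1 := one_in K1 St n1; have o2 := one_in K2 St n2.
case/triP: St => _ cl.
apply/card_le1_eqP => a b /setIP[aS aX] /setIP[bS bX].
case: (eqVneq a b) => [->//|ab]; exfalso.
have eab : e a b by apply: cl.
have two : forall Q : {set T}, a \in Q -> b \in Q -> 1 < #|S :&: Q|.
  by move=> Q aQ bQ; apply/card_gt1P; exists a, b; rewrite !inE aS bS aQ bQ.
move: aX bX; rewrite !inE.
case a1: (a \in Q1); case a2: (a \in Q2); case b1: (b \in Q1); case b2: (b \in Q2) => //= _ _.
all: try by have := two Q1 a1 b1; rewrite ltnNge o1.
all: try by have := two Q2 a2 b2; rewrite ltnNge o2.
- by move/negP: (c2_cross p1 p2 a1 (negbT a2) b2 (negbT b1)).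
- by move/negP: (c2_cross p1 p2 b1 (negbT b2) a2 (negbT a1)); rewrite esy.
Qed.

Lemma c2_cardX : #|X| + #|Q1 :&: Q2| = 8.
Proof.
have Q14 : #|Q1| = 4 by case/andP: K1 => /eqP.
have Q24 : #|Q2| = 4 by case/andP: K2 => /eqP.
by rewrite /X cardsUI Q14 Q24.
Qed.

Lemma c2_O_tri (S : {set T}) : S \in O -> S \in tri.
Proof. by case/setIdP. Qed.

Lemma c2_sumY (F : {set {set T}}) (Y : {set T}) :
  \sum_(S in F) #|S :&: Y| = \sum_(y in Y) #|[set S in F | y \in S]|.
Proof.
have E : forall S : {set T}, #|S :&: Y| = \sum_(y in Y) (y \in S : nat).
  by move=> S; rewrite sum_bool_card; apply: eq_card => y; rewrite !inE andbC.
rewrite (eq_bigr _ (fun S _ => E S)) exchange_big /=.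
by apply: eq_bigr => y _; rewrite sum_bool_card.
Qed.

Lemma c2_shared10 p : p \in Q1 -> p \in Q2 -> #|T| = 10 -> #|O| <= 4.
Proof.
move=> p1 p2 T10.
have I1 : #|Q1 :&: Q2| = 1.
  by apply/eqP; rewrite eqn_leq I12; apply/card_gt0P; exists p; rewrite inE p1 p2.
have cX : #|X| = 7 by have := c2_cardX; rewrite I1; lia.
have cY : #|~: X| = 3 by have := cardsC X; rewrite cX T10; lia.
have L1 : 2 * #|O| <= \sum_(S in O) #|S :&: ~: X|.
  rewrite mulnC -sum_nat_const; apply: leq_sum => S SO.
  have := c2_shX p1 p2 SO; have := c2_split (_ : #|S| = 3).
  case/triP: (c2_O_tri SO) => S3 _; move/(_ S3); lia.
have L2 : \sum_(y in ~: X) #|[set S in O | y \in S]| <= 9.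
  rewrite -[9]/(3 * 3) -{1}cY -sum_nat_const; apply: leq_sum => y yY.
  apply: (@leq_trans #|[set S in tri | y \in S]|).
    apply: subset_leq_card; apply/subsetP => S /setIdP[SO yS].
    by apply/setIdP; split => //; apply: c2_O_tri.
  apply: deg4.
  apply: (@leq_trans #|[set w in X | e y w] :|: (~: X :\ y)|).
    apply: subset_leq_card; apply/subsetP => w; rewrite inE => yw; apply/setUP.
    case wX: (w \in X); [left | right]; first by apply/setIdP.
    by rewrite in_setD1 in_setC wX andbT (eq_sym w y) (eneq yw).
  apply: (leq_trans (leq_card_setU _ _)).
  have : #|~: X :\ y| = 2 by move: cY; rewrite (cardsD1 y) yY add1n => -[].
  move=> ->; have := c2_nX (_ : y \notin X).
  by rewrite inE in yY; move/(_ yY); lia.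
rewrite c2_sumY in L1; lia.
Qed.


Lemma c2_shared9 p : p \in Q1 -> p \in Q2 -> #|T| = 9 -> #|O| <= 2.
Proof.
move=> p1 p2 T9.
have I1 : #|Q1 :&: Q2| = 1.
  by apply/eqP; rewrite eqn_leq I12; apply/card_gt0P; exists p; rewrite inE p1 p2.
have cX : #|X| = 7 by have := c2_cardX; rewrite I1; lia.
have cY : #|~: X| = 2 by have := cardsC X; rewrite cX T9; lia.
have /eqP/cards2P[y1 [y2 [y12 defY]]] := cY.
have inY : forall S, S \in O -> (y1 \in S) && (y2 \in S).
  move=> S SO; have := c2_shX p1 p2 SO.
  case/triP: (c2_O_tri SO) => S3 _; have := c2_split S3.
  move=> E1 E2; have E3 : 2 <= #|S :&: ~: X| by lia.
  have E4 : S :&: ~: X = ~: X.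
    apply/eqP; rewrite eqEcard subsetIr cY E3 andbT //.
  have : y1 \in S :&: ~: X by rewrite E4 defY !inE eqxx.
  have : y2 \in S :&: ~: X by rewrite E4 defY !inE eqxx orbT.
  by rewrite !inE => /andP[-> _] /andP[-> _].
apply: (@leq_trans #|[set w in X | e y1 w]|); last first.
  by apply: c2_nX; rewrite -in_setC defY !inE eqxx.
apply: (tri_pairs y12).
  by move=> S SO; have /andP[h1 h2] := inY S SO; split => //; apply: c2_O_tri.
move=> S w SO wS w1 w2; apply/setIdP; split.
  by apply/negPn; rewrite -in_setC defY !inE negb_or w1 w2.
have /andP[h1 _] := inY S SO.
by case/triP: (c2_O_tri SO) => _ cl; apply: cl; rewrite // eq_sym.
Qed.

Lemma c2_disjY (S : {set T}) : #|Q1 :&: Q2| = 0 -> S \in O -> 0 < #|S :&: ~: X|.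
Proof.
move=> I0 SO; have := c2_SX SO.
case/triP: (c2_O_tri SO) => S3 _; have := c2_split S3; lia.
Qed.

Lemma c2_disj9 : #|Q1 :&: Q2| = 0 -> #|T| = 9 -> #|O| <= 1.
Proof.
move=> I0 T9.
have cX : #|X| = 8 by have := c2_cardX; rewrite I0; lia.
have cY : #|~: X| = 1 by have := cardsC X; rewrite cX T9; lia.
have /eqP/cards1P[y defY] := cY.
have yX : y \notin X by rewrite -in_setC defY inE.
apply: (@leq_trans #|[set S in tri | S \subset y |: [set w in X | e y w]]|); last first.
  apply: tri_small; rewrite cardsU1; have := c2_nX yX.
  by case: (y \notin _) => /=; lia.
apply: subset_leq_card; apply/subsetP => S SO; apply/setIdP; split; first exact: c2_O_tri.
have : 0 < #|S :&: ~: X| by apply: c2_disjY.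
case/card_gt0P => v; rewrite inE defY inE => /andP[vS /eqP vy]; subst v.
apply: c2_sub_nbr => //; first exact: c2_O_tri.
by move=> v _; rewrite -in_setC defY inE => /eqP.
Qed.

Lemma c2_disj10 : #|Q1 :&: Q2| = 0 -> #|T| = 10 -> #|O| <= 4.
Proof.
move=> I0 T10.
have cX : #|X| = 8 by have := c2_cardX; rewrite I0; lia.
have cY : #|~: X| = 2 by have := cardsC X; rewrite cX T10; lia.
have /eqP/cards2P[y [z [yz defY]]] := cY.
have yX : y \notin X by rewrite -in_setC defY !inE eqxx.
have zX : z \notin X by rewrite -in_setC defY !inE eqxx orbT.
have outX : forall v, v \notin X -> (v == y) || (v == z) by move=> v; rewrite -in_setC defY !inE.
set O1 := [set S in O | (y \in S) && (z \in S)].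
set O2 := [set S in O | (y \in S) && (z \notin S)].
set O3 := [set S in O | (z \in S) && (y \notin S)].
have h1 : #|O1| <= 2.
  apply: (leq_trans _ (c2_nX yX)); apply: (tri_pairs yz).
    by move=> S /setIdP[SO /andP[h h']]; split => //; apply: c2_O_tri.
  move=> S w /setIdP[SO /andP[yS zS]] wS wy wz; apply/setIdP; split.
    by apply/negPn/negP => /outX; rewrite (negbTE wy) (negbTE wz).
  by case/triP: (c2_O_tri SO) => _ cl; apply: cl; rewrite // eq_sym.
have h2 : forall a b, a != b -> (forall v, v \notin X -> (v == a) || (v == b)) ->
   a \notin X -> #|[set S in O | (a \in S) && (b \notin S)]| <= 1.
  move=> a b ab out aX.
  apply: (@leq_trans #|[set S in tri | S \subset a |: [set w in X | e a w]]|); last first.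
    apply: tri_small; rewrite cardsU1; have := c2_nX aX.
    by case: (a \notin _) => /=; lia.
  apply: subset_leq_card; apply/subsetP => S /setIdP[SO /andP[aS bS]].
  apply/setIdP; split; first exact: c2_O_tri.
  apply: c2_sub_nbr => //; first exact: c2_O_tri.
  move=> v vS /out /orP[/eqP //|/eqP vb]; subst v.
  by rewrite vS in bS.
have h3 : #|O2| <= 1 := h2 y z yz outX yX.
have h4 : #|O3| <= 1.
  apply: h2 => //; first by rewrite eq_sym.
  by move=> v /outX; rewrite orbC.
apply: (@leq_trans (#|O1| + #|O2| + #|O3|)); last by lia.
apply: (leq_trans _ (leq_add (leq_card_setU _ _) (leqnn _))).
apply: (leq_trans _ (leq_card_setU _ _)); apply: subset_leq_card.
apply/subsetP => S SO.
have : 0 < #|S :&: ~: X| by apply: c2_disjY.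
case/card_gt0P => v /setIP[vS vY]; have : v \in [set y; z] by rewrite -defY.
case/set2P => vE; subst v.
- case zS: (z \in S).
    by apply/setUP; left; apply/setUP; left; apply/setIdP; rewrite vS zS.
  by apply/setUP; left; apply/setUP; right; apply/setIdP; rewrite vS zS.
- case yS: (y \in S).
    by apply/setUP; left; apply/setUP; left; apply/setIdP; rewrite vS yS.
  by apply/setUP; right; apply/setIdP; rewrite vS yS.
Qed.

End C2.


Lemma case2 (Q1 Q2 : {set T}) : isK4 Q1 -> isK4 Q2 -> Q1 != Q2 ->
  (#|T| = 9 -> #|tri| <= 10) /\ (#|T| = 10 -> #|tri| <= 12).
Proof.
move=> K1 K2 n12.
have I12 : #|Q1 :&: Q2| <= 1.
  rewrite leqNgt; apply/negP => /(K4_share K1 K2) E; by rewrite E eqxx in n12.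
have base := c2_base K1 K2 I12.
case: (posnP #|Q1 :&: Q2|) => [I0|].
  have d9 := c2_disj9 K1 K2 I12 I0; have d10 := c2_disj10 K1 K2 I12 I0.
  by split => T0; [move: (d9 T0) | move: (d10 T0)]; lia.
case/card_gt0P => p; rewrite inE => /andP[p1 p2].
have s9 := c2_shared9 K1 K2 I12 p1 p2; have s10 := c2_shared10 K1 K2 I12 p1 p2.
by split => T0; [move: (s9 T0) | move: (s10 T0)]; lia.
Qed.


Lemma bound910 : (#|T| = 9 -> #|tri| <= 10) /\ (#|T| = 10 -> #|tri| <= 12).
Proof.
case: (boolP [exists Q, isK4 Q]) => [/existsP[Q KQ]|]; last first.
  rewrite negb_exists => /forallP noK; have h0 := case0 noK.
  by split => T0; rewrite T0 in h0; lia.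
case: (boolP [exists Q', isK4 Q' && (Q' != Q)]) => [/existsP[Q' /andP[KQ' nQ]]|].
  exact: (case2 KQ' KQ nQ).
rewrite negb_exists => /forallP uniqK.
have uK : forall Q', isK4 Q' -> Q' = Q.
  by move=> Q' KQ'; move: (uniqK Q'); rewrite KQ' /= negbK => /eqP.
have := case1 KQ uK.
have Q4 : #|Q| = 4 by case/andP: KQ => /eqP.
have cQ := cardsC Q; rewrite Q4 in cQ.
move=> h0; split => T0; rewrite T0 in cQ; lia.
Qed.

Lemma K4_low (Q : {set T}) : isK4 Q -> #|T| = 11 ->
  exists2 x, x \in Q & #|[set S in tri | x \in S]| <= 3.
Proof.
move=> KQ T11.
have Q4 : #|Q| = 4 by case/andP: KQ => /eqP.
have cQ : #|~: Q| = 7 by have := cardsC Q; rewrite Q4 T11; lia.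
have sum : \sum_(x in Q) #|[set z in ~: Q | e x z]| <= 7.
  have E : forall x, #|[set z in ~: Q | e x z]| = \sum_(z in ~: Q) (e x z : nat).
    by move=> x; rewrite sum_bool_card.
  rewrite (eq_bigr _ (fun x _ => E x)) exchange_big /=.
  rewrite -cQ -sum1_card; apply: leq_sum => z zQ; rewrite sum_bool_card.
  apply: (leq_trans _ (nbrQ KQ (_ : z \notin Q))); last by rewrite -in_setC.
  by apply: subset_leq_card; apply/subsetP => w; rewrite !inE esy.
have [x xQ hx] : exists2 x, x \in Q & #|[set z in ~: Q | e x z]| <= 1.
  case: (boolP [exists x in Q, #|[set z in ~: Q | e x z]| <= 1]) => [/exists_inP[x ? ?]|]; first by exists x.
  rewrite negb_exists_in => /forall_inP H2.
  have : \sum_(x in Q) 2 <= \sum_(x in Q) #|[set z in ~: Q | e x z]|.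
    by apply: leq_sum => x /H2; rewrite -ltnNge.
  by rewrite sum_nat_const Q4 => h; lia.
exists x => //.
set A := [set S in tri | S \subset Q].
have Qxt : Q :\ x \in A.
  apply/setIdP; split; last by apply: subsetDl.
  apply/triP; split; first by move: Q4; rewrite (cardsD1 x) xQ add1n => -[].
  move=> a b; rewrite !inE => /andP[_ aQ] /andP[_ bQ] ab.
  by case/andP: KQ => _ /cliqueP; apply.
have cA : #|A| <= 4 by have := tri_sub Q; rewrite Q4.
apply: (@leq_trans #|A :\ (Q :\ x)|).
  apply: subset_leq_card; apply/subsetP => S /setIdP[St xS].
  rewrite in_setD1; apply/andP; split.
    by apply: contraTneq xS => ->; rewrite !inE eqxx.
  apply/setIdP; split => //; apply/subsetP => v vS.
  apply/negPn/negP => vQ.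
  case/triP: (St) => S3 cl.
  have vx : v != x by apply: contraNneq vQ => ->.
  have xv : e x v by apply: cl; rewrite // eq_sym.
  have [u [w [[uS wS uw ux wx] defS]]] := set3 S3 xS.
  have [u' [u'S u'v u'x]] : exists u', [/\ u' \in S, u' != v & u' != x].
    case: (eqVneq u v) => [uv|uv]; last by exists u.
    by exists w; split => //; rewrite -uv eq_sym.
  have xu' : e x u' by apply: cl; rewrite // eq_sym.
  have u'v' : e u' v by apply: cl.
  case u'Q: (u' \in Q).
    by move/negP: vQ; apply; apply: (K4_in KQ xQ u'Q _ xv u'v'); rewrite eq_sym.
  have : #|[set z in ~: Q | e x z]| > 1.
    apply/card_gt1P; exists u', v; rewrite !inE u'Q vQ xu' xv u'v //.
  by rewrite ltnNge hx.
by move: cA; rewrite (cardsD1 (Q :\ x) A) Qxt add1n ltnS.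
Qed.

End G.


Section Del.
Variables (T : finType) (e : rel T) (x : T).
Local Notation T' := {y : T | y != x}.
Definition edel : rel T' := fun u v => e (val u) (val v).

Lemma del_simple : simple_graph e -> simple_graph edel.
Proof. by case=> ir sy; split => [u|u v]; [exact: ir | exact: sy]. Qed.

Lemma del_free : ~ contains_subgraph P4hat_edge e -> ~ contains_subgraph P4hat_edge edel.
Proof.
move=> nf [f [fi fe]]; apply: nf; exists (fun i => val (f i)); split.
  by move=> i j /val_inj /fi.
by move=> u v h; apply: fe.
Qed.

Lemma card_del : #|{: T'}| = #|T|.-1.
Proof. by rewrite card_sig cardC1. Qed.

Lemma tri_del : #|triangles e| = #|triangles edel| + #|[set S in triangles e | x \in S]|.
Proof.
rewrite -(cardsID [set S : {set T} | x \in S] (triangles e)) addnC; congr (_ + _); last first.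
  by apply: eq_card => S; rewrite !inE andbC.
have -> : triangles e :\: [set S : {set T} | x \in S] =
          (fun S' : {set T'} => val @: S') @: triangles edel.
  apply/setP => S; rewrite inE; apply/andP/imsetP.
  - rewrite inE => -[xS /triP[S3 cl]].
    exists [set u : T' | val u \in S]; last first.
      apply/setP => v; apply/idP/imsetP => [vS|[u]]; last by rewrite inE => uS ->.
      have vx : v != x by apply: contraNneq xS => <-.
      by exists (exist _ v vx); rewrite ?inE.
    have E : val @: [set u : T' | val u \in S] = S.
      apply/setP => v; apply/imsetP/idP => [[u]|vS]; first by rewrite inE => uS ->.
      have vx : v != x by apply: contraNneq xS => <-.
      by exists (exist _ v vx); rewrite ?inE.
    apply/triP; split.
      by rewrite -(card_imset _ val_inj) E.
    move=> u v; rewrite !inE => uS vS uv; rewrite /edel; apply: cl => //.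
  - case=> S' /triP[S3 cl] ->; split.
      by rewrite inE; apply/imsetP => -[u _ ux]; move: (valP u); rewrite -ux eqxx.
    apply/triP; split; first by rewrite (card_imset _ val_inj).
    move=> a b /imsetP[u uS ->] /imsetP[v vS ->] uv.
    by apply: cl => //; apply: contraNneq uv => ->.
rewrite card_imset //; exact: imset_inj val_inj.
Qed.

End Del.


Lemma bound_all (T : finType) (e : rel T) : simple_graph e ->
  ~ contains_subgraph P4hat_edge e ->
  [/\ #|T| = 9 -> #|triangles e| <= 10, #|T| = 10 -> #|triangles e| <= 12
    & #|T| = 11 -> #|triangles e| <= 15].
Proof.
move=> [eirr esy] nf.
have [b9 b10] := bound910 esy eirr nf.
split => // T11.
case: (boolP [exists Q, isK4 e Q]) => [/existsP[Q KQ]|]; last first.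
  rewrite negb_exists => /forallP noK; have h0 := case0 esy eirr nf noK.
  by rewrite T11 in h0; lia.
have [x xQ hx] := K4_low esy nf KQ T11.
rewrite (tri_del e x).
have [ir' sy'] := del_simple x (conj eirr esy).
have nf' := @del_free _ _ x nf.
have [_ b10'] := bound910 sy' ir' nf'.
have c' := card_del x; rewrite T11 in c'.
have := b10' c'; lia.
Qed.

Theorem theorem2 :
  forall n t : nat, (n, t) \in [:: (9, 11); (10, 13); (11, 16)] ->
  forall e : rel 'I_n, simple_graph e ->
  t <= num_triangles e ->
  contains_subgraph P4hat_edge e.
Proof.
move=> n t Hnt e se ht; apply: NNPP => nf.
have [b9 b10 b11] := bound_all se nf.
rewrite card_ord in b9 b10 b11.
move: Hnt ht; rewrite /num_triangles !inE !xpair_eqE => /or3P[] /andP[/eqP En /eqP Et];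
  subst n t => ht.
- by have := b9 erefl; lia.
- by have := b10 erefl; lia.
- by have := b11 erefl; lia.
Qed.
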